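(* In the modified multi-phase process described in the context, every element $x\in S^+_{3/4}$ that is considered by the process passes the preliminary test and all the following $\eta$ tests with probability at most $2^{-n}$.
   Context: Let $n\ge2$ be an integer such that $m=n/\log_2 n$ is an integer, and let $S'$ be a set of $m$ distinct elements of a totally ordered set. For $\rho\in(0,1]$, $S^-_\rho$ denotes the set of the $\lceil \rho m\rceil$ smallest elements of $S'$ and $S^+_\rho=S'\setminus S^-_\rho$. There are two oracles $\mathcal{O}_1,\mathcal{O}_2$ which can be queried with an element $x\in S'$ and answer ''relevant'' or ''not relevant'' in constant time, all answers being mutually independent; for constants $p_1,p_2\in[0,\tfrac12)$: $\mathcal{O}_1$ reports $x$ relevant with probability at least $1-p_1$ if $x\in S^-_{1/6}$ and at most $p_1$ if $x\in S^+_{1/3}$; $\mathcal{O}_2$ reports $x$ relevant with probability at least $1-p_2$ if $x\in S^-_{1/3}$ and at most $p_2$ if $x\in S^+_{3/4}$. For $q\in[0,\tfrac12)$ let $c_q=\lceil 4(1-q)/(1-2q)^2\rceil$. Let $\eta = 1+\lceil \log_2 \frac{n}{\log_2 n}\rceil$. Modified multi-phase process: the elements of $S'$ are considered one at a time. For the current element $x$, a preliminary test is performed consisting of $8c_{p_1}\lceil \ln n\rceil+1$ queries to $\mathcal{O}_1$ on $x$; it is passed if the majority report $x$ relevant, otherwise $x$ is discarded and the next element is considered. Then, for $i=1,\dots,\eta$, the $i$-th test consists of $2\lceil 2^i\ln n\rceil c_{p_2}+1$ queries to $\mathcal{O}_2$ on $x$ and is passed if the majority report $x$ relevant; if $x$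 fails a test it is discarded and the next element is considered. The process returns the first element that passes the $\eta$-th test. Here $\ln$ is the natural logarithm. *)

(* Defs.v *)
From mathcomp Require Import all_boot all_order all_algebra.
From mathcomp Require Import all_classical all_reals all_analysis.
Set Implicit Arguments. Unset Strict Implicit. Unset Printing Implicit Defensive.
Import Order.TTheory GRing.Theory Num.Theory.
Local Open Scope ring_scope.

Definition ceilN {R : realType} (x : R) : nat := `|Num.ceil x|%N.

(* S^-_rho for rho = a/b : the ceil(a m / b) smallest elements of S' (m = size S') *)
Definition S_minus {d} {T : orderType d} (a b : nat) (S' : seq T) : seq T :=
  take ((a * size S' + b - 1) %/ b)%N (sort (@Order.le d T) S').

Definition S_plus {d} {T : orderType d} (a b : nat) (S' : seq T) : seq T :=
  [seq y <- S' | y \notin S_minus a b S'].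

Definition log2 {R : realType} (x : R) : R := ln x / ln 2.

Definition c_ {R : realType} (q : R) : nat := ceilN (4 * (1 - q) / (1 - 2 * q) ^+ 2).

Definition eta_ {R : realType} (n : nat) : nat :=
  (1 + ceilN (log2 (n%:R / log2 (n%:R : R))))%N.

(* sizes of the successive tests applied to an element:
   block 0 = preliminary test (8 c_{p1} ceil(ln n) + 1 queries to O1),
   block i (1 <= i <= eta) = i-th test (2 ceil(2^i ln n) c_{p2} + 1 queries to O2) *)
Definition test_sizes {R : realType} (n : nat) (p1 p2 : R) : seq nat :=
  (8 * c_ p1 * ceilN (ln (n%:R : R)) + 1)%N ::
  [seq (2 * ceilN ((2 : R) ^+ i * ln (n%:R : R)) * c_ p2 + 1)%N | i <- iota 1 (eta_ (R := R) n)].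

Definition block_of (s : seq nat) (j : nat) : nat :=
  find (fun i => (j < sumn (take i.+1 s))%N) (iota 0 (size s)).

(* the element passes every test: in each block, a strict majority of answers is "relevant" *)
Definition passes_all (s : seq nat) (w : {ffun 'I_(sumn s) -> bool}) : bool :=
  [forall i : 'I_(size s),
     (nth 0 s i < 2 * \sum_(j < sumn s | block_of s j == i) (w j : nat))%N].

(* probability (independent answers) that an element whose O1-answers are "relevant"
   with probability r1 and whose O2-answers are "relevant" with probability r2
   passes the preliminary test and all eta following tests *)
Definition prob_pass_all {R : realType} (n : nat) (p1 p2 r1 r2 : R) : R :=
  let s := test_sizes n p1 p2 in
  \sum_(w : {ffun 'I_(sumn s) -> bool} | passes_all w)
     \prod_(j < sumn s)
        (let r := if block_of s j == 0%N then r1 else r2 in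
         if w j then r else 1 - r).

(* Main.v *)
Require Import Defs.
From mathcomp Require Import all_boot all_order all_algebra.
From mathcomp Require Import all_classical all_reals all_analysis.
From mathcomp Require Import zify ring lra.
Import Order.TTheory GRing.Theory Num.Theory.
Local Open Scope ring_scope.

Lemma sumn_take_mono (s : seq nat) k k' : (k <= k')%N ->
  (sumn (take k s) <= sumn (take k' s))%N.
Proof.
elim: s k k' => [|x s IH] [|k] [|k'] //=; try lia.
move=> h; have := IH k k' h; lia.
Qed.

Lemma sumn_takeS (s : seq nat) i : (i < size s)%N ->
  sumn (take i.+1 s) = (sumn (take i s) + nth 0 s i)%N.
Proof.
elim: s i => [|x s IH] [|i] //=; first by move=> _; rewrite take0 /=; lia.
move=> h; rewrite IH //; lia.
Qed.

Lemma block_of_eq s (j i : nat) : (i < size s)%N ->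
  (block_of s j == i) = (sumn (take i s) <= j < sumn (take i.+1 s))%N.
Proof.
move=> his; rewrite /block_of.
set P := (fun k => (j < sumn (take k.+1 s))%N).
have nthI k : (k < size s)%N -> nth 0%N (iota 0 (size s)) k = k.
  by move=> hk; rewrite nth_iota.
apply/idP/idP.
- move/eqP=> hf.
  have hP : has P (iota 0 (size s)) by rewrite has_find size_iota hf.
  have := nth_find 0%N hP; rewrite hf nthI // /P => ->.
  rewrite andbT.
  case: i hf his => [|i] hf his; first by rewrite take0.
  have := before_find 0%N (i:=i) (a:=P) (s:=iota 0 (size s)).
  rewrite hf ltnSn => /(_ isT); rewrite nthI; last by apply: ltnW.
  by rewrite /P => /negbT; rewrite -leqNgt.
- case/andP=> h1 h2.
  have hP : has P (iota 0 (size s)).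
    by apply/hasP; exists i; [rewrite mem_iota; lia|].
  have hlt : (find P (iota 0 (size s)) < size s)%N by rewrite -{2}(size_iota 0 (size s)) -has_find.
  apply/eqP; apply/eqP; rewrite eqn_leq; apply/andP; split.
  + rewrite leqNgt; apply/negP=> hi.
    have := before_find 0%N hi; rewrite nthI // /P h2 //.
  + rewrite leqNgt; apply/negP=> hi.
    have := nth_find 0%N hP; rewrite nthI // /P => hj.
    have hm := @sumn_take_mono s _ _ hi; move: hj hm h1; rewrite /P /=; lia.
Qed.

Lemma count_interval (N a b : nat) :
  (\sum_(0 <= j < N | (a <= j < b)%N) 1 = minn N b - minn N a)%N.
Proof.
elim: N => [|N IH]; first by rewrite big_geq //; lia.
rewrite big_mkcond big_nat_recr //= -big_mkcond IH; case: ifP => h; lia.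
Qed.

Lemma card_block s (i : nat) : (i < size s)%N ->
  #|[pred j : 'I_(sumn s) | block_of s j == i]| = nth 0%N s i.
Proof.
move=> his; rewrite -sum1_card.
rewrite (eq_bigl (fun j : 'I_(sumn s) => (sumn (take i s) <= j < sumn (take i.+1 s))%N)); last first.
  by move=> j; rewrite /= inE block_of_eq.
rewrite -(big_mkord (fun j => (sumn (take i s) <= j < sumn (take i.+1 s))%N) (fun _ => 1%N)).
rewrite count_interval sumn_takeS //.
have := @sumn_take_mono s i.+1 (size s) his; rewrite take_size sumn_takeS //.
lia.
Qed.
Lemma main_bound (R : realType) (N : nat) (B : pred 'I_N)
  (P : pred {ffun 'I_N -> bool}) (F : 'I_N -> bool -> R) (a q : R) (cnt : nat) :
 (forall j b, 0 <= F j b) -> 1 <= a -> #|B| = cnt ->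
 (forall w, P w -> (cnt < 2 * \sum_(j | B j) (w j : nat))%N) ->
 (forall j, ~~ B j -> F j true + F j false = 1) ->
 (forall j, B j -> F j true * a + F j false / a <= q) ->
 \sum_(w | P w) \prod_j F j (w j) <= q ^+ cnt.
Proof.
move=> F0 a1 hB hP hF1 hFq.
have a0 : 0 < a by lra.
pose G (j : 'I_N) (b : bool) := if B j then (if b then a else a^-1) else 1.
have G0 j b : 0 <= G j b.
  by rewrite /G; case: (B j); case: b => //; rewrite ?invr_ge0; lra.
have step1 w : P w -> 1 <= \prod_j G j (w j).
  move=> Pw; rewrite /G -big_mkcond /=.
  rewrite (eq_bigr (fun j => a^-1 * (a ^+ 2) ^+ (w j : nat))); last first.
    by move=> j _; case: (w j); rewrite /= ?expr0 ?mulr1 // expr1 expr2 mulrA mulVf ?mul1r //; lra.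
  rewrite big_split /= prodrXr -exprM.
  rewrite (eq_bigl (mem B)) // prodr_const hB.
  have := hP w Pw; set k := (\sum_(j | B j) _)%N => hk.
  apply: (le_trans (y := a^-1 ^+ cnt * a ^+ cnt)).
    by rewrite exprVn mulVf // expf_neq0 //; lra.
  rewrite ler_pM2l; last by rewrite exprn_gt0 // invr_gt0.
  by apply: ler_weXn2l => //; lia.
apply: (le_trans (y := \sum_(w | P w) \prod_j (F j (w j) * G j (w j)))).
  apply: ler_sum => w Pw; rewrite big_split /=.
  rewrite -{1}(mulr1 (\prod_j F j (w j))) ler_wpM2l //; last exact: step1.
  by apply: prodr_ge0 => j _.
apply: (le_trans (y := \sum_(w : {ffun 'I_N -> bool}) \prod_j (F j (w j) * G j (w j)))).
  rewrite [X in _ <= X](bigID P) /= lerDl.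
  by apply: sumr_ge0 => w _; apply: prodr_ge0 => j _; rewrite mulr_ge0.
rewrite -(bigA_distr_bigA (fun j b => F j b * G j b)) /=.
rewrite -hB -prodr_const (big_mkcond (mem B)) /=.
apply: ler_prod => j _.
have hjB : (j \in B) = B j by [].
rewrite big_bool /= /G hjB; case: ifP => hj.
  rewrite addr_ge0 ?mulr_ge0 ?invr_ge0 //=; try lra.
  by have := hFq j hj.
have := hF1 j (negbT hj); have := F0 j true; have := F0 j false.
move=> h1 h2 h3; apply/andP; split; lra.
Qed.
Lemma ceilN_ge (R : realType) (y : R) : y <= (Defs.ceilN y)%:R.
Proof.
rewrite /Defs.ceilN natr_absz; apply: (le_trans (archimedean.Num.Theory.ceil_ge y)).
by rewrite ler_int ler_norm.
Qed.

Lemma pow2_ceil (R : realType) (z : R) : 0 < z ->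
  z <= 2 ^+ Defs.ceilN (log2 z).
Proof.
move=> z0; have l2 : 0 < ln (2:R) by rewrite ln_gt0 //; lra.
have p0 : 0 < (2:R) ^+ Defs.ceilN (log2 z) by rewrite exprn_gt0.
rewrite -ler_ln ?posrE //.
rewrite lnXn; last by lra.
rewrite -[_ *+ Defs.ceilN _]mulr_natr.
have := ceilN_ge _ (log2 z); rewrite /log2 ler_pdivrMr // => h.
by rewrite mulrC.
Qed.

Lemma eta_bound (R : realType) (n : nat) : (2 <= n)%N ->
  2 * n%:R * ln (2:R) <= (2:R) ^+ eta_ (R:=R) n * ln (n%:R : R).
Proof.
move=> n2.
have l2 : 0 < ln (2:R) by rewrite ln_gt0 //; lra.
have nR : (2:R) <= n%:R by rewrite (ler_nat R 2 n).
have L0 : 0 < ln (n%:R : R) by rewrite ln_gt0 //; lra.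
have z0 : 0 < n%:R / log2 (n%:R : R).
  by rewrite /log2 divr_gt0 // ?divr_gt0 //; lra.
have := pow2_ceil _ _ z0.
rewrite /eta_ exprD expr1 /log2 => h.
set z := n%:R / (ln (n%:R : R) / ln 2) in h *.
have hz : z * ln (n%:R : R) = n%:R * ln 2.
  by rewrite /z invf_div mulrA divfK // gt_eqF.
rewrite -mulrA -hz mulrA ler_pM2r // ler_pM2l //.
Qed.

Lemma step_q (R : realType) (p r : R) : 0 <= r -> r <= p -> p < 1/2 ->
  r * (2 - 2 * p) + (1 - r) / (2 - 2 * p) <= 1 - (1 - 2 * p) ^+ 2 / 2.
Proof.
move=> r0 rp ph.
have a0 : 0 < 2 - 2 * p by lra.
rewrite -(ler_pM2r a0) mulrDl divfK ?gt_eqF //.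
have h : 0 <= (p - r) * ((2 - 2 * p) ^+ 2 - 1).
  apply: mulr_ge0; first lra.
  rewrite subr_ge0 expr2; nra.
move: h; rewrite !expr2; nra.
Qed.

Lemma final_bound (R : realType) (p : R) (n K c : nat) : 0 <= p -> p < 1/2 ->
  4 * (1 - p) / (1 - 2 * p) ^+ 2 <= c%:R ->
  2 * n%:R * ln (2:R) <= K%:R ->
  (1 - (1 - 2 * p) ^+ 2 / 2) ^+ (2 * K * c + 1) <= 2 ^- n.
Proof.
move=> p0 ph hc hK.
set u := (1 - 2 * p) ^+ 2.
have u0 : 0 < u by rewrite exprn_gt0 //; lra.
have u1 : u <= 1.
  by rewrite /u expr2; nra.
have l2 : 0 < ln (2:R) by rewrite ln_gt0 //; lra.
have hcu : 2 <= c%:R * u.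
  rewrite -(ler_pdivrMr _ _ u0); apply: le_trans hc.
  rewrite ler_pM2r ?invr_gt0 //; lra.
have q0 : 0 <= 1 - u / 2 by lra.
apply: (le_trans (y := expR (- (u / 2)) ^+ (2 * K * c + 1))).
  apply: lerXn2r; rewrite ?nnegrE ?expR_ge0 //.
  by have := expR_ge1Dx (- (u / 2)); rewrite addrC.
rewrite -expRM_natl.
have -> : (2:R) ^- n = expR (- (n%:R * ln 2)).
  by rewrite expRN expRM_natl lnK // posrE.
rewrite ler_expR mulrN lerN2.
have hKc : 2 * n%:R * ln 2 * 2 <= K%:R * (c%:R * u).
  apply: ler_pM => //; rewrite ?mulr_ge0 //; lra.
rewrite natrD !natrM.
have hn : 0 <= n%:R * ln (2:R) by rewrite mulr_ge0 // ltW.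
nra.
Qed.

Lemma nth_ts (h : nat) (f : nat -> nat) e : (1 <= e)%N ->
  nth 0%N (h :: map f (iota 1 e)) e = f e.
Proof.
case: e => // e _.
rewrite -[nth 0%N (h :: _) e.+1]/(nth 0%N (map f (iota 1 e.+1)) e).
by rewrite (nth_map 0%N) ?size_iota // nth_iota // add1n.
Qed.

Theorem lemma15 (R : realType) (n m : nat) (d : Order.disp_t) (T : orderType d)
    (S' : seq T) (p1 p2 : R) (o1 o2 : T -> R) (x : T) :
  (2 <= n)%N ->
  m%:R = n%:R / log2 (n%:R : R) ->
  uniq S' -> size S' = m ->
  0 <= p1 < 1 / 2 -> 0 <= p2 < 1 / 2 ->
  (forall y, y \in S' -> 0 <= o1 y <= 1) ->
  (forall y, y \in S' -> 0 <= o2 y <= 1) ->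
  (forall y, y \in S_minus 1 6 S' -> 1 - p1 <= o1 y) ->
  (forall y, y \in S_plus 1 3 S' -> o1 y <= p1) ->
  (forall y, y \in S_minus 1 3 S' -> 1 - p2 <= o2 y) ->
  (forall y, y \in S_plus 3 4 S' -> o2 y <= p2) ->
  x \in S_plus 3 4 S' ->
  prob_pass_all n p1 p2 (o1 x) (o2 x) <= 2 ^- n.
Proof.
move=> n2 _ _ _ /andP[p10 p1h] /andP[p20 p2h] ho1 ho2 _ _ _ hp2 hx.
have xS : x \in S' by move: hx; rewrite mem_filter => /andP[].
have /andP[r10 r11] := ho1 x xS.
have /andP[r20 r21] := ho2 x xS.
have r2p := hp2 x hx.
move: (o1 x) (o2 x) r10 r11 r20 r21 r2p => r1 r2 r10 r11 r20 r21 r2p.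
have e1 : (1 <= eta_ (R:=R) n)%N by rewrite /eta_ addnC addn1.
have ss : size (test_sizes n p1 p2) = (eta_ (R:=R) n).+1.
  by rewrite /test_sizes /= size_map size_iota.
have sn : nth 0%N (test_sizes n p1 p2) (eta_ (R:=R) n) =
   (2 * Defs.ceilN ((2 : R) ^+ eta_ (R:=R) n * ln (n%:R : R)) * c_ p2 + 1)%N.
  by rewrite /test_sizes nth_ts.
have hK : 2 * n%:R * ln (2:R) <= (Defs.ceilN ((2 : R) ^+ eta_ (R:=R) n * ln (n%:R : R)))%:R.
  exact: (le_trans (eta_bound R n n2) (ceilN_ge _ _)).
have hc : 4 * (1 - p2) / (1 - 2 * p2) ^+ 2 <= (c_ p2)%:R by exact: ceilN_ge.
move: (Defs.ceilN _) (c_ p2) hK hc sn => K c hK hc sn.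
move: (eta_ (R:=R) n) e1 ss sn => e e1 ss sn.
rewrite /prob_pass_all.
move: (test_sizes n p1 p2) ss sn => s ss sn.
apply: (le_trans (@main_bound R (sumn s) (fun j => block_of s j == e) (passes_all (s:=s))
   (fun j b => if b then (if block_of s j == 0%N then r1 else r2)
               else 1 - (if block_of s j == 0%N then r1 else r2))
   (2 - 2 * p2) (1 - (1 - 2 * p2) ^+ 2 / 2) (nth 0%N s e) _ _ _ _ _ _)).
- by move=> j [|]; case: ifP => _; rewrite ?subr_ge0.
- lra.
- by rewrite -(card_block s e) ?ss.
- have he : (e < size s)%N by rewrite ss.
  move=> w /forallP /(_ (Ordinal he)) /=.
  done.
- by move=> j _; rewrite addrC subrK.
- move=> j /eqP hj; rewrite hj; have -> : (e == 0%N) = false by case: e e1 {ss sn hj}.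
  exact: step_q.
- rewrite sn; exact: final_bound.
Qed.
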